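(* Let $p$ be a ProbNetKAT program, $S=\mathcal{S}[\![p]\!]$ and $U$ as defined in the context. Each of the Markov chains $S$, $U$ and $SU$ (matrix product) is monotone: if $(a,b)$ can reach $(a',b')$ in $T\in\{S,U,SU\}$, i.e. $(T^n)_{(a,b),(a',b')}>0$ for some $n\ge 0$, then $b\subseteq b'$.
   Context: $\mathsf{Pk}$ is a finite set of packets; $[\varphi]$ is the Iverson bracket. For a ProbNetKAT program $p$, $\mathcal{B}[\![p]\!]\in[0,1]^{2^{\mathsf{Pk}}\times 2^{\mathsf{Pk}}}$ is its (stochastic) matrix semantics, where $\mathcal{B}[\![p]\!]_{ab}$ is the probability that $p$ outputs packet set $b$ on input packet set $a$. The small-step matrix on states $(a,b)\in 2^{\mathsf{Pk}}\times 2^{\mathsf{Pk}}$ is $S_{(a,b),(a',b')}=[b'=b\cup a]\,\mathcal{B}[\![p]\!]_{a,a'}$. A state $(a,b)$ is saturated if whenever $(a,b)$ can reach $(a',b')$ in $S$ (i.e. $(S^n)_{(a,b),(a',b')}>0$ for some $n\ge0$) we have $b'=b$. The matrix $U$ is $U_{(a,b),(a',b')}=[b'=b]\cdot[a'=\emptyset]$ if $(a,b)$ is saturated and $U_{(a,b),(a',b')}=[b'=b]\cdot[a'=a]$ otherwise. *)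

(* Defs.v *)
From HB Require Import structures.
From mathcomp Require Import all_boot all_order all_algebra.
From Stdlib Require Import ClassicalEpsilon.
Set Implicit Arguments. Unset Strict Implicit. Unset Printing Implicit Defensive.
Import Order.TTheory GRing.Theory Num.Theory.
Local Open Scope ring_scope.

Definition fmx (R : realFieldType) (T : finType) := T -> T -> R.

Definition fmx_mul (R : realFieldType) (T : finType) (A B : fmx R T) : fmx R T :=
  fun x y => \sum_(z : T) A x z * B z y.

Definition fmx_id (R : realFieldType) (T : finType) : fmx R T :=
  fun x y => (x == y)%:R.

Fixpoint fmx_pow (R : realFieldType) (T : finType) (A : fmx R T) (n : nat) : fmx R T :=
  match n with
  | 0 => @fmx_id R T
  | m.+1 => fmx_mul (fmx_pow A m) A
  end.

Definition reaches (R : realFieldType) (T : finType) (A : fmx R T) (s t : T) : Prop :=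
  exists n : nat, 0 < fmx_pow A n s t.

(* A stochastic matrix on packet sets 2^Pk x 2^Pk (the shape of B[[p]]). *)
Definition stochastic (R : realFieldType) (T : finType) (B : fmx R T) : Prop :=
  (forall a b, 0 <= B a b /\ B a b <= 1) /\ (forall a, \sum_(b : T) B a b = 1).

Definition state (Pk : finType) := ({set Pk} * {set Pk})%type.

Definition Smat (R : realFieldType) (Pk : finType) (B : fmx R {set Pk})
  : fmx R (state Pk) :=
  fun s t => (t.2 == s.2 :|: s.1)%:R * B s.1 t.1.

Definition saturated (R : realFieldType) (Pk : finType) (B : fmx R {set Pk})
  (s : state Pk) : Prop :=
  forall t, reaches (Smat B) s t -> t.2 = s.2.

Definition Umat (R : realFieldType) (Pk : finType) (B : fmx R {set Pk})
  : fmx R (state Pk) :=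
  fun s t =>
    if excluded_middle_informative (saturated B s)
    then ((t.2 == s.2) && (t.1 == set0))%:R
    else ((t.2 == s.2) && (t.1 == s.1))%:R.

(* Main.v *)
Require Import Defs.
From HB Require Import structures.
From mathcomp Require Import all_boot all_order all_algebra.
From Stdlib Require Import ClassicalEpsilon.
Import Order.TTheory GRing.Theory Num.Theory.
Set Implicit Arguments. Unset Strict Implicit.
Local Open Scope ring_scope.

Section Aux.
Variables (R : realFieldType) (T : finType).

Definition nonneg (A : fmx R T) := forall x y, 0 <= A x y.

Lemma nonneg_mul (A B : fmx R T) : nonneg A -> nonneg B -> nonneg (fmx_mul A B).
Proof.
move=> hA hB x y; rewrite /fmx_mul; apply: sumr_ge0 => z _; exact: mulr_ge0.
Qed.

Lemma mul_pos_ex (A B : fmx R T) x y : nonneg A -> nonneg B ->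
  0 < fmx_mul A B x y -> exists z, 0 < A x z /\ 0 < B z y.
Proof.
move=> hA hB; rewrite /fmx_mul => hp.
case: (boolP [exists z, (0 < A x z) && (0 < B z y)]).
  by move/existsP=> [z /andP[h1 h2]]; exists z.
move=> hn; exfalso.
have : \sum_z A x z * B z y = 0.
  apply: big1 => z _.
  have: ~~ ((0 < A x z) && (0 < B z y)) by move/existsPn: hn; apply.
  rewrite negb_and -!leNgt => /orP[h|h].
    have -> : A x z = 0 by apply/eqP; rewrite eq_le h hA.
    by rewrite mul0r.
  have -> : B z y = 0 by apply/eqP; rewrite eq_le h hB.
  by rewrite mulr0.
by move=> h0; rewrite h0 ltxx in hp.
Qed.

Lemma id_nonneg : nonneg (@fmx_id R T).
Proof. by move=> x y; rewrite /fmx_id ler0n. Qed.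

Lemma pow_nonneg (A : fmx R T) n : nonneg A -> nonneg (fmx_pow A n).
Proof.
move=> hA; elim: n => [|n IH] /=; [exact: id_nonneg| exact: nonneg_mul].
Qed.

Lemma reach_ind (A : fmx R T) (P : T -> T -> Prop) :
  nonneg A -> (forall x, P x x) -> (forall x y z, P x y -> P y z -> P x z) ->
  (forall x y, 0 < A x y -> P x y) ->
  forall s t, reaches A s t -> P s t.
Proof.
move=> hA hr htr h1 s t [n]; elim: n t => [|n IH] t /=.
  rewrite /fmx_id; case: eqP => [->|]; first by [].
  by rewrite ltxx.
move/(mul_pos_ex (pow_nonneg n hA) hA) => [z [hz1 hz2]].
exact: (htr _ _ _ (IH _ hz1) (h1 _ _ hz2)).
Qed.

End Aux.

Theorem lemma4p5 (R : realFieldType) (Pk : finType) (B : fmx R {set Pk}) :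
  stochastic B ->
  (forall s t : state Pk, reaches (Smat B) s t -> s.2 \subset t.2) /\
  (forall s t : state Pk, reaches (Umat B) s t -> s.2 \subset t.2) /\
  (forall s t : state Pk,
     reaches (fmx_mul (Smat B) (Umat B)) s t -> s.2 \subset t.2).
Proof.
move=> [hB _].
have refl : forall x : state Pk, x.2 \subset x.2 by move=> x; exact: subxx.
have tr : forall x y z : state Pk, x.2 \subset y.2 -> y.2 \subset z.2 -> x.2 \subset z.2.
  by move=> x y z; apply: subset_trans.
have Snn : nonneg (Smat B).
  by move=> x y; rewrite /Smat; apply: mulr_ge0; [rewrite ler0n | case: (hB x.1 y.1)].
have Unn : nonneg (Umat B).
  by move=> x y; rewrite /Umat; case: excluded_middle_informative => ?; rewrite ler0n.
have S1 : forall x y : state Pk, 0 < Smat B x y -> x.2 \subset y.2.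
  move=> x y; rewrite /Smat; case: eqP => [->|]; first by rewrite subsetUl.
  by rewrite mul0r ltxx.
have U1 : forall x y : state Pk, 0 < Umat B x y -> x.2 \subset y.2.
  move=> x y; rewrite /Umat; case: excluded_middle_informative => ?;
  (case: eqP => [->|]; [by rewrite subxx|by rewrite /= ltxx]).
split; first exact: reach_ind Snn refl tr S1.
split; first exact: reach_ind Unn refl tr U1.
apply: reach_ind (nonneg_mul Snn Unn) refl tr _.
move=> x y /(mul_pos_ex Snn Unn) [z [h1 h2]].
exact: subset_trans (S1 _ _ h1) (U1 _ _ h2).
Qed.
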